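(* The relative simplicial complex $X=(Q^*,A^* )$ is not partitionable.
   Context: $Q^*$ is the $3$-dimensional simplicial complex on vertex set $\{0,1,\dots,13\}$ whose faces are all subsets of the following $20$ facets: $\{2,5,6,12\}$, $\{1,5,8,11\}$, $\{0,1,2,5\}$, $\{1,4,8,9\}$, $\{1,2,3,10\}$, $\{4,5,8,13\}$, $\{0,1,2,3\}$, $\{1,4,9,10\}$, $\{1,2,9,10\}$, $\{1,2,5,6\}$, $\{0,2,5,12\}$, $\{4,5,7,13\}$, $\{1,4,5,8\}$, $\{1,2,6,9\}$, $\{1,3,4,7\}$, $\{1,3,4,10\}$, $\{1,5,6,11\}$, $\{1,4,5,7\}$, $\{1,6,9,11\}$, $\{1,8,9,11\}$. $A^*$ is the induced subcomplex of $Q^*$ on vertex set $\{0,2,3,4,6,7,8,10,12,13\}$; its facets are $\{0,2,3\}$, $\{4,7,13\}$, $\{3,4,10\}$, $\{0,2,12\}$, $\{3,4,7\}$, $\{2,3,10\}$, $\{2,6,12\}$, $\{4,8,13\}$. A relative simplicial complex $(\Delta,\Gamma)$ is a pair of simplicial complexes with $\Gamma\subseteq\Delta$; its faces are the elements of $\Delta\setminus\Gamma$, and its facets are the inclusion-maximal faces of $\Delta\setminus\Gamma$. A pure relative complex with facets $F_1,\dots,F_n$ is partitionable if its set of faces is a disjoint union of Boolean intervals $[R_i,F_i]=\{G : R_i\subseteq G\subseteq F_i\}$, $i=1,\dots,n$ (each interval consisting of faces of the relative complex). *)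

(* Defs.v *)
From mathcomp Require Import all_boot.
Set Implicit Arguments. Unset Strict Implicit. Unset Printing Implicit Defensive.

Notation V := 'I_14.

Definition vset (s : seq nat) : {set V} := [set x : V | val x \in s].

Definition facetsQ : seq {set V} := map vset
  [:: [:: 2;5;6;12]; [:: 1;5;8;11]; [:: 0;1;2;5]; [:: 1;4;8;9]; [:: 1;2;3;10];
      [:: 4;5;8;13]; [:: 0;1;2;3]; [:: 1;4;9;10]; [:: 1;2;9;10]; [:: 1;2;5;6];
      [:: 0;2;5;12]; [:: 4;5;7;13]; [:: 1;4;5;8]; [:: 1;2;6;9]; [:: 1;3;4;7];
      [:: 1;3;4;10]; [:: 1;5;6;11]; [:: 1;4;5;7]; [:: 1;6;9;11]; [:: 1;8;9;11]].

Definition Qstar : {set {set V}} :=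
  [set G : {set V} | has (fun F : {set V} => G \subset F) facetsQ].

Definition Avert : {set V} := vset [:: 0;2;3;4;6;7;8;10;12;13].
Definition Astar : {set {set V}} := [set G in Qstar | G \subset Avert].

Definition rel_faces (T : finType) (Delta Gamma : {set {set T}}) : {set {set T}} :=
  Delta :\: Gamma.

Definition facets_of (T : finType) (faces : {set {set T}}) : {set {set T}} :=
  [set G in faces | [forall H in faces, (G \subset H) ==> (H == G)]].

Definition interval (T : finType) (R F : {set T}) : {set {set T}} :=
  [set G : {set T} | (R \subset G) && (G \subset F)].

Definition partitionable (T : finType) (faces : {set {set T}}) : Prop :=
  exists R : {set T} -> {set T},
    [/\ (forall F, F \in facets_of faces ->
            R F \subset F /\ interval (R F) F \subset faces),
        (forall F1 F2, F1 \in facets_of faces -> F2 \in facets_of faces ->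
            F1 != F2 -> [disjoint interval (R F1) F1 & interval (R F2) F2])
      & faces = \bigcup_(F in facets_of faces) interval (R F) F].

(* Main.v *)
Require Import Defs.
From mathcomp Require Import all_boot.

Set Implicit Arguments. Unset Strict Implicit. Unset Printing Implicit Defensive.

Definition Qlists : seq (seq nat) :=
  [:: [:: 2;5;6;12]; [:: 1;5;8;11]; [:: 0;1;2;5]; [:: 1;4;8;9]; [:: 1;2;3;10];
      [:: 4;5;8;13]; [:: 0;1;2;3]; [:: 1;4;9;10]; [:: 1;2;9;10]; [:: 1;2;5;6];
      [:: 0;2;5;12]; [:: 4;5;7;13]; [:: 1;4;5;8]; [:: 1;2;6;9]; [:: 1;3;4;7];
      [:: 1;3;4;10]; [:: 1;5;6;11]; [:: 1;4;5;7]; [:: 1;6;9;11]; [:: 1;8;9;11]].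
Definition Alist : seq nat := [:: 0;2;3;4;6;7;8;10;12;13].
Definition fl : seq (seq nat * seq (seq nat)) := [:: ([:: 1; 4; 8; 9], [:: [:: 4; 8; 9]; [:: 1; 4; 8; 9]]);
 ([:: 1; 4; 9; 10], [:: [:: 4; 9]; [:: 1; 4; 9]; [:: 4; 9; 10]; [:: 1; 4; 9; 10]]);
 ([:: 1; 2; 9; 10], [:: [:: 9; 10]; [:: 1; 9; 10]; [:: 2; 9; 10]; [:: 1; 2; 9; 10]]);
 ([:: 1; 2; 6; 9], [:: [:: 2; 9]; [:: 1; 2; 9]; [:: 2; 6; 9]; [:: 1; 2; 6; 9]]);
 ([:: 1; 8; 9; 11], [:: [:: 8; 9]; [:: 1; 8; 9]; [:: 8; 9; 11]; [:: 1; 8; 9; 11]]);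
 ([:: 1; 6; 9; 11], [:: [:: 9]; [:: 1; 9]; [:: 6; 9]; [:: 1; 6; 9]; [:: 9; 11]; [:: 1; 9; 11]; [:: 6; 9; 11]; [:: 1; 6; 9; 11]]);
 ([:: 1; 5; 8; 11], [:: [:: 8; 11]; [:: 1; 8; 11]; [:: 5; 8; 11]; [:: 1; 5; 8; 11]]);
 ([:: 1; 5; 6; 11], [:: [:: 11]; [:: 1; 11]; [:: 5; 11]; [:: 1; 5; 11]; [:: 6; 11]; [:: 1; 6; 11]; [:: 5; 6; 11]; [:: 1; 5; 6; 11]]);
 ([:: 1; 2; 5; 6], [:: [:: 1; 6]; [:: 1; 2; 6]; [:: 1; 5; 6]; [:: 1; 2; 5; 6]]);
 ([:: 1; 4; 5; 8], [:: [:: 1; 8]; [:: 1; 4; 8]; [:: 1; 5; 8]; [:: 1; 4; 5; 8]]);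
 ([:: 4; 5; 8; 13], [:: [:: 5; 8]; [:: 4; 5; 8]; [:: 5; 8; 13]; [:: 4; 5; 8; 13]]);
 ([:: 2; 5; 6; 12], [:: [:: 5; 6]; [:: 2; 5; 6]; [:: 5; 6; 12]; [:: 2; 5; 6; 12]]);
 ([:: 4; 5; 7; 13], [:: [:: 5; 13]; [:: 4; 5; 13]; [:: 5; 7; 13]; [:: 4; 5; 7; 13]]);
 ([:: 1; 4; 5; 7], [:: [:: 4; 5]; [:: 1; 4; 5]; [:: 5; 7]; [:: 1; 5; 7]; [:: 4; 5; 7]; [:: 1; 4; 5; 7]]);
 ([:: 0; 1; 2; 5], [:: [:: 1; 5]; [:: 0; 1; 5]; [:: 1; 2; 5]; [:: 0; 1; 2; 5]]);
 ([:: 0; 2; 5; 12], [:: [:: 5]; [:: 0; 5]; [:: 2; 5]; [:: 0; 2; 5]; [:: 5; 12]; [:: 0; 5; 12]; [:: 2; 5; 12]; [:: 0; 2; 5; 12]]);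
 ([:: 0; 1; 2; 3], [:: [:: 0; 1]; [:: 0; 1; 2]; [:: 0; 1; 3]; [:: 0; 1; 2; 3]]);
 ([:: 1; 2; 3; 10], [:: [:: 1; 2]; [:: 1; 2; 3]; [:: 1; 2; 10]; [:: 1; 2; 3; 10]]);
 ([:: 1; 3; 4; 7], [:: [:: 1; 7]; [:: 1; 3; 7]; [:: 1; 4; 7]; [:: 1; 3; 4; 7]]);
 ([:: 1; 3; 4; 10], [:: [:: 1]; [:: 1; 3]; [:: 1; 4]; [:: 1; 3; 4]; [:: 1; 10]; [:: 1; 3; 10]; [:: 1; 4; 10]; [:: 1; 3; 4; 10]])].
Definition facelist : seq (seq nat) := [:: [:: 1]; [:: 0; 1]; [:: 1; 2]; [:: 0; 1; 2]; [:: 1; 3]; [:: 0; 1; 3]; [:: 1; 2; 3]; [:: 0; 1; 2; 3]; [:: 1; 4]; [:: 1; 3; 4]; [:: 5]; [:: 0; 5]; [:: 1; 5]; [:: 0; 1; 5]; [:: 2; 5]; [:: 0; 2; 5]; [:: 1; 2; 5]; [:: 0; 1; 2; 5]; [:: 4; 5]; [:: 1; 4; 5]; [:: 1; 6]; [:: 1; 2; 6]; [:: 5; 6]; [:: 1; 5; 6]; [:: 2; 5; 6]; [:: 1; 2; 5; 6]; [:: 1; 7]; [:: 1; 3; 7]; [:: 1; 4; 7]; [:: 1; 3; 4; 7]; [:: 5; 7]; [:: 1; 5; 7]; [:: 4; 5; 7]; [:: 1; 4; 5; 7]; [:: 1; 8]; [:: 1; 4; 8]; [:: 5; 8]; [::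 1; 5; 8]; [:: 4; 5; 8]; [:: 1; 4; 5; 8]; [:: 9]; [:: 1; 9]; [:: 2; 9]; [:: 1; 2; 9]; [:: 4; 9]; [:: 1; 4; 9]; [:: 6; 9]; [:: 1; 6; 9]; [:: 2; 6; 9]; [:: 1; 2; 6; 9]; [:: 8; 9]; [:: 1; 8; 9]; [:: 4; 8; 9]; [:: 1; 4; 8; 9]; [:: 1; 10]; [:: 1; 2; 10]; [:: 1; 3; 10]; [:: 1; 2; 3; 10]; [:: 1; 4; 10]; [:: 1; 3; 4; 10]; [:: 9; 10]; [:: 1; 9; 10]; [:: 2; 9; 10]; [:: 1; 2; 9; 10]; [:: 4; 9; 10]; [:: 1; 4; 9; 10]; [:: 11]; [:: 1; 11]; [:: 5; 11]; [:: 1; 5; 11]; [:: 6; 11]; [:: 1; 6; 11]; [:: 5; 6; 11]; [:: 1; 5; 6; 11]; [:: 8; 11]; [:: 1; 8; 11]; [:: 5; 8; 11]; [:: 1; 5; 8; 11]; [:: 9; 11]; [:: 1; 9; 11]; [:: 6; 9; 11]; [:: 1; 6; 9; 11]; [:: 8; 9; 11]; [:: 1; 8; 9; 11]; [:: 5; 12]; [:: 0; 5; 12]; [:: 2; 5; 12]; [:: 0; 2; 5; 12]; [:: 5; 6; 12]; [:: 2; 5; 6; 12]; [:: 5; 13]; [:: 4; 5; 13]; [:: 5; 7; 13]; [:: 4; 5; 7; 13]; [:: 5; 8; 13]; [:: 4; 5; 8; 13]].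

Fixpoint memn (x : nat) (s : seq nat) := if s is y :: s' then (if eqn x y then true else memn x s') else false.
Definition sub (s1 s2 : seq nat) := all (fun x => memn x s2) s1.
Definition disj (r1 F1 r2 F2 : seq nat) := ~~ (sub r1 F2 && sub r2 F1).
Definition covers (p : seq nat * seq nat) (g : seq nat) := sub p.1 g && sub g p.2.
Fixpoint subs (l : seq nat) : seq (seq nat) :=
  if l is a :: l' then [seq a :: s | s <- subs l'] ++ subs l' else [:: [::]].
Definition good (faces : seq (seq nat)) (pre : seq (seq nat * seq nat)) (rest : seq (seq nat * seq (seq nat))) :=
  all (fun g => has (fun l => sub g l.1) rest || has (fun p => covers p g) pre) faces.
Fixpoint srch (pre : seq (seq nat * seq nat)) (rest : seq (seq nat * seq (seq nat))) : bool :=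
  match rest with
  | [::] => false
  | (l, fs) :: rest' =>
    all (fun s => if sub s Alist then true else
                  if all (fun p => disj s l p.1 p.2) pre then
                  if good fs (rcons pre (s, l)) rest' then srch (rcons pre (s, l)) rest'
                  else true else true)
        (subs l)
  end.


Lemma srch_true : srch [::] fl = true.
Proof. vm_compute. reflexivity. Qed.

Definition small (s : seq nat) := all (fun x => x < 14) s.

Lemma memnE x s : memn x s = (x \in s).
Proof.
elim: s => //= y s ->; rewrite in_cons.
have -> : eqn x y = (x == y) by [].
by case: (x == y).
Qed.

Lemma sub_vset s1 s2 : small s1 -> (vset s1 \subset vset s2) = sub s1 s2.
Proof.
move=> sm; apply/subsetP/allP => H x.
- move=> xs; have x14 : x < 14 := allP sm x xs.
  rewrite memnE; have := H (@inord 13 x); rewrite /vset !inE /= inordK //; exact.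
- rewrite /vset !inE => xs; rewrite -memnE; exact: H.
Qed.

Lemma filter_subs (p : pred nat) l : filter p l \in subs l.
Proof.
elim: l => [|a l IH] /=; first by rewrite inE.
case: (p a); rewrite mem_cat ?IH ?orbT //.
by rewrite (map_f (fun s => a :: s)).
Qed.

Lemma vset_filter (R : {set V}) l : R \subset vset l ->
  vset (filter (fun x => @inord 13 x \in R) l) = R.
Proof.
move=> RF; apply/setP => x; rewrite /vset !inE mem_filter /= inord_val.
case xR: (x \in R) => //=.
by have := subsetP RF x xR; rewrite inE.
Qed.

Lemma disj_int (r1 F1 r2 F2 : {set V}) : r1 \subset F1 -> r2 \subset F2 ->
  [disjoint interval r1 F1 & interval r2 F2] -> ~~ ((r1 \subset F2) && (r2 \subset F1)).
Proof.
move=> h1 h2 D; apply/negP => /andP[a b].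
have xA : (r1 :|: r2) \in interval r1 F1 by rewrite inE subsetUl subUset h1 b.
by have := disjointFr D xA; rewrite inE subsetUr subUset a h2.
Qed.

Notation faces := (rel_faces Qstar Astar).

Lemma mem_faces g : small g -> (vset g \in faces) = has (sub g) Qlists && ~~ sub g Alist.
Proof.
move=> sg; rewrite /rel_faces in_setD /Astar /Qstar !inE /facetsQ has_map.
rewrite (@eq_has _ _ (sub g)); last by move=> l /=; rewrite sub_vset.
rewrite /Avert sub_vset //.
rewrite /Qlists /Alist; by case: (has _ _); case: (sub _ _).
Qed.

Lemma Qlists_max : all (fun a => all (fun b => sub a b ==> (a == b)) Qlists) Qlists.
Proof. by vm_compute. Qed.

Lemma Qlists_ok : all (fun l => small l && has (sub l) Qlists && ~~ sub l Alist) Qlists.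
Proof. by vm_compute. Qed.

Lemma faces_Qstar G : G \in faces -> exists2 l, l \in Qlists & G \subset vset l.
Proof.
rewrite /rel_faces in_setD /Qstar !inE => /andP[_].
rewrite /facetsQ => /hasP [F /mapP [l lin ->] GF].
by exists l.
Qed.

Lemma facet_lists l : l \in Qlists -> vset l \in facets_of faces.
Proof.
move=> lin; have /andP[/andP[sl h1] h2] := allP Qlists_ok l lin.
have lF : vset l \in faces by rewrite mem_faces // h1 h2.
rewrite inE lF /=; apply/forall_inP => H HF; apply/implyP => lH.
have [l' l'in Hl'] := faces_Qstar HF.
have ll' : sub l l' by rewrite -sub_vset //; apply: subset_trans Hl'.
have /eqP E := implyP (allP (allP Qlists_max l lin) l' l'in) ll'.
by rewrite eqEsubset lH E Hl'.
Qed.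

Lemma facets_in G : G \in facets_of faces -> exists2 l, l \in Qlists & G = vset l.
Proof.
rewrite inE => /andP[GF /forall_inP mx].
have [l lin Gl] := faces_Qstar GF.
have lF : vset l \in faces.
  by move: (facet_lists lin); rewrite inE => /andP[].
exists l => //; apply/esym/eqP; exact: (implyP (mx _ lF) Gl).
Qed.

Lemma key (R : {set V} -> {set V})
  (HR : forall F, F \in facets_of faces -> R F \subset F /\ interval (R F) F \subset faces)
  (Hd : forall F1 F2, F1 \in facets_of faces -> F2 \in facets_of faces -> F1 != F2 ->
          [disjoint interval (R F1) F1 & interval (R F2) F2])
  (Hc : faces = \bigcup_(F in facets_of faces) interval (R F) F) :
  forall rest pre,
   (forall p, p \in pre -> [/\ R (vset p.2) = vset p.1, small p.1, small p.2
                              & vset p.2 \in facets_of faces]) ->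
   (forall q, q \in rest -> [/\ small q.1, vset q.1 \in facets_of faces
                              & all (fun g => small g && (vset g \in faces)) q.2]) ->
   uniq ([seq vset p.2 | p <- pre] ++ [seq vset q.1 | q <- rest]) ->
   (forall G, G \in facets_of faces ->
       G \in [seq vset p.2 | p <- pre] ++ [seq vset q.1 | q <- rest]) ->
   srch pre rest = false.
Proof.
elim=> [|[l fs] rest IH] pre Hpre Hrest Hu Hall; first by [].
have [sl Fl Hfs] := Hrest (l, fs) (mem_head _ _).
have [RF intF] := HR _ Fl.
set s := filter (fun x => @inord 13 x \in R (vset l)) l.
have Es : vset s = R (vset l) by rewrite vset_filter.
have ss : small s.
  by apply/allP => x; rewrite mem_filter => /andP[_ /(allP sl)].
have sin : s \in subs l := filter_subs _ l.
have RFf : R (vset l) \in faces.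
  by apply: (subsetP intF); rewrite inE subxx RF.
have nA : sub s Alist = false.
  by move: RFf; rewrite -Es mem_faces // => /andP[_ /negbTE].
have Fnin : vset l \notin [seq vset p.2 | p <- pre].
  move: Hu; rewrite /= cat_uniq => /and3P[_ H _].
  by apply/negP => Hin; move: H; rewrite /= Hin.
have dis : all (fun p => disj s l p.1 p.2) pre.
  apply/allP => p pin; have [E1 s1 s2 Fp] := Hpre p pin.
  have neq : vset l != vset p.2.
    by apply/negP => /eqP E; move: Fnin; rewrite E (map_f (fun p : seq nat * seq nat => vset p.2) pin).
  have := disj_int RF (HR _ Fp).1 (Hd _ _ Fl Fp neq).
  by rewrite /disj -!sub_vset // Es E1.
have gd : good fs (rcons pre (s, l)) rest.
  apply/allP => g gin; have /andP[sg gF] := allP Hfs g gin.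
  move: gF; rewrite {1}Hc => /bigcupP [F'' F''fac]; rewrite inE => /andP[a b].
  move: (Hall _ F''fac); rewrite mem_cat => /orP[|].
  - move=> /mapP [p pin E]; have [E1 s1 s2 Fp] := Hpre p pin.
    apply/orP; right; apply/hasP; exists p; first by rewrite mem_rcons in_cons pin orbT.
    by rewrite /covers -!sub_vset // -E1 -E a b.
  - rewrite map_cons in_cons /= => /orP[/eqP E|/mapP [q qin E]].
    + apply/orP; right; apply/hasP; exists (s, l); first by rewrite mem_rcons mem_head.
      by rewrite /covers -!sub_vset //= Es -E a b.
    + apply/orP; left; apply/hasP; exists q => //.
      by rewrite -sub_vset // -E.
have IH' : srch (rcons pre (s, l)) rest = false.
  apply: IH.
  - move=> p; rewrite mem_rcons in_cons => /orP[/eqP ->|]; last exact: Hpre.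
    by split.
  - by move=> q qin; apply: Hrest; rewrite in_cons qin orbT.
  - by rewrite map_rcons cat_rcons.
  - by move=> G /Hall; rewrite map_rcons cat_rcons.
rewrite /=; apply/negbTE/allPn; exists s => //; by rewrite nA dis gd IH'.
Qed.

Lemma fl_ok : all (fun q => small q.1 && (q.1 \in Qlists) &&
   all (fun g => [&& small g, has (sub g) Qlists & ~~ sub g Alist]) q.2) fl.
Proof. by vm_compute. Qed.

Lemma Qin_fl : all (fun l => l \in [seq q.1 | q <- fl]) Qlists.
Proof. by vm_compute. Qed.

Lemma fl_uniq : uniq ([seq vset p.2 | p <- ([::] : seq (seq nat * seq nat))] ++ [seq vset q.1 | q <- fl]).
Proof.
rewrite cat0s (_ : [seq vset q.1 | q <- fl] = map vset (map fst fl)); last by rewrite -map_comp.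
rewrite map_inj_in_uniq; first by vm_compute.
move=> a b /mapP[qa qa_in ->] /mapP[qb qb_in ->] E.
have /andP[/andP[sa qaQ] _] := allP fl_ok qa qa_in.
have /andP[/andP[sb qbQ] _] := allP fl_ok qb qb_in.
apply/eqP; apply: (implyP (allP (allP Qlists_max _ qaQ) _ qbQ)).
by rewrite -sub_vset // E.
Qed.

Theorem theorem3p6 : ~ partitionable (rel_faces Qstar Astar).
Proof.
move=> [R [HR Hd Hc]].
suff : srch [::] fl = false by rewrite srch_true.
apply: (key HR Hd Hc).
- by move=> p; rewrite in_nil.
- move=> q qin; have /andP[/andP[sq qQ] Hg] := allP fl_ok q qin.
  split => //; first exact: facet_lists.
  apply/allP => g gin; have /and3P[sg h1 h2] := allP Hg g gin.
  by rewrite sg mem_faces // h1 h2.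
- exact: fl_uniq.
- move=> G /facets_in [l lin ->].
  have /mapP [q qin ->] := allP Qin_fl l lin.
  by rewrite /= (map_f (fun q : seq nat * seq (seq nat) => vset q.1) qin).
Qed.
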